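(* Let $k\ge 4$, $n=2k-1$, $\lambda\in\overline{\mathcal{U}}_{T_n}$, and let $Y=\mathrm{KN}(S_\lambda)$ with hook lengths $h_{i,j}$. Write the elements of $S_\lambda$ increasingly as $0=s_0<s_1<\cdots$ and let $z$ be the index with $s_z=n-2$. Then for every $1\le i\le z$, $$h_{i,i}=2\,h_{i,z+1}.$$
   Context: A partition of $N$ into distinct parts is a sequence $\lambda=(\lambda_1<\dots<\lambda_t)$ of positive integers with sum $N$ and $t\ge 2$, identified with its set of parts. Missing parts: $\mathcal{M}_\lambda=\{1,\dots,\lambda_t\}\setminus\lambda$. $\lambda$ is refinable if two distinct missing parts sum to a part of $\lambda$, unrefinable otherwise; $\mathcal{U}_N$ is the set of unrefinable partitions of $N$. An element of $\mathcal{U}_N$ is maximal if its largest part is the maximum of the largest parts of elements of $\mathcal{U}_N$; $\widetilde{\mathcal{U}}_N$ is the set of these and $\overline{\mathcal{U}}_N=\{\lambda\in\widetilde{\mathcal{U}}_N:\#\mathcal{M}_\lambda=\lfloor\lambda_t/2\rfloor\}$. $T_n=n(n+1)/2$. For $\lambda\in\overline{\mathcal{U}}_{T_n}$ (with $n=2k-1$, $k\ge 4$) one knows $\lambda_t=2n-4$, $t=n-2$ and $n-2\notin\lambda$. $S_\lambda=\mathbb{N}_0\setminus\lambda$. The Keith–Nath transformation sends a set $S\subseteq\mathbb{N}_0$ with $0\in S$ and finite complement to the Young diagram $\mathrm{KN}(S)$ whose boundary is the lattice path that, starting at the origin, takes for $j=0,1,\dots,\max(\mathbb{N}_0\setminus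 S)$ an east step if $j\in S$ and a north step otherwise. Diagrams are in English convention; $h_{i,j}$ is the hook length of the cell in row $i$ (from the top) and column $j$ (from the left): (cells to its right in its row) + (cells below it in its column) + 1. *)

(* Defs.v *)
From mathcomp Require Import all_boot.
Set Implicit Arguments. Unset Strict Implicit. Unset Printing Implicit Defensive.

Definition T (n : nat) : nat := n * n.+1 %/ 2.

Definition is_dpart (N : nat) (l : seq nat) : bool :=
  [&& sorted ltn l, 0 \notin l, sumn l == N & 1 < size l].

Definition largest (l : seq nat) : nat := \max_(g <- l) g.

Definition missing (l : seq nat) : seq nat :=
  [seq m <- iota 1 (largest l) | m \notin l].

Definition refinable (l : seq nat) : bool :=
  has (fun a => has (fun b => (a != b) && (a + b \in l)) (missing l)) (missing l).

Definition unrefinable (N : nat) (l : seq nat) : bool :=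
  is_dpart N l && ~~ refinable l.

Definition maximal_unref (N : nat) (l : seq nat) : Prop :=
  unrefinable N l /\ (forall l', unrefinable N l' -> largest l' <= largest l).

Definition Ubar (N : nat) (l : seq nat) : Prop :=
  maximal_unref N l /\ size (missing l) = (largest l)./2.

Definition S_of (l : seq nat) : pred nat := fun s => s \notin l.

(* Keith--Nath lattice path of S, where m = max (N_0 \ S):
   for j = 0..m, [false] = east step (j in S), [true] = north step. *)
Definition KN_path (S : pred nat) (m : nat) : seq bool :=
  [seq ~~ S j | j <- iota 0 m.+1].

(* The Young diagram bounded (to its lower right) by the path, English
   convention: row lengths listed from the top row to the bottom row.
   The north step at position k of the path lies at x-coordinate
   (number of east steps before it); it bounds a row of that length;
   later north steps are higher rows. *)
Definition KN_shape (p : seq bool) : seq nat :=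
  rev [seq count negb (take k p) | k <- iota 0 (size p) & nth false p k].

(* cell (i,j) (1-indexed, row from top, column from left) belongs to the diagram *)
Definition in_diagram (sh : seq nat) (i j : nat) : bool :=
  [&& 0 < i, i <= size sh, 0 < j & j <= nth 0 sh i.-1].

Definition hook (sh : seq nat) (i j : nat) : nat :=
  (nth 0 sh i.-1 - j) + count (fun r => j <= r) (drop i sh) + 1.

(* Main.v *)
Require Import Defs.
From mathcomp Require Import all_boot zify.

Lemma count_iota_sum (P : pred nat) m n :
  count P (iota m n) = \sum_(m <= i < m + n) P i.
Proof.
rewrite /index_iota addKn -sum1_count big_mkcond /=.
by apply: eq_bigr => i _; case: (P i).
Qed.

Lemma filter_iota_sorted (l : seq nat) M :
  sorted ltn l -> (forall x, x \in l -> x < M) ->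
  [seq x <- iota 0 M | x \in l] = l.
Proof.
move=> sl hM; apply: (irr_sorted_eq ltn_trans ltnn).
- exact: (sorted_filter ltn_trans _ (iota_ltn_sorted 0 M)).
- exact: sl.
move=> x; rewrite mem_filter mem_iota add0n /=.
by case xl: (x \in l) => //=; rewrite hM.
Qed.

Lemma largest_in (l : seq nat) : l != [::] -> largest l \in l.
Proof.
rewrite /largest; elim: l => [//|x s IH] _.
rewrite big_cons; case: s IH => [|y s] IH.
  by rewrite big_nil maxn0 mem_head.
have := IH isT; set m := \max_(g <- _) g => hm; clearbody m.
rewrite /maxn; case: ifP => _; by rewrite in_cons ?hm ?eqxx ?orbT.
Qed.

Lemma le_largest (l : seq nat) x : x \in l -> x <= largest l.
Proof. by move=> h; rewrite /largest; apply: (leq_bigmax_seq x h). Qed.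

Lemma fold_sum (F : nat -> nat) L h : h + h <= L.+1 ->
  \sum_(0 <= a < h) F a + \sum_(L.+1 - h <= a < L.+1) F a =
  \sum_(0 <= a < h) (F a + F (L - a)).
Proof.
elim: h => [|h IH] hh; first by rewrite !big_geq ?subn0.
rewrite (big_nat_recr h 0 F) // (big_nat_recr h 0 (fun a => F a + F (L - a))) //= -IH; last by lia.
rewrite (@big_ltn _ _ _ (L.+1 - h.+1)); last by lia.
have -> : (L.+1 - h.+1).+1 = L.+1 - h by lia.
have -> : L.+1 - h.+1 = L - h by lia.
lia.
Qed.

Lemma whole_sum (F : nat -> nat) L :
  \sum_(0 <= a < L.+1) F a =
  \sum_(0 <= a < (L.+1)./2) (F a + F (L - a)) + (if odd L then 0 else F (L./2)).
Proof.
have hL := odd_double_half L.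
set H := (L.+1)./2.
have hH : H = odd L + L./2 by rewrite /H -hL; case: (odd L) => /=; rewrite ?uphalf_double ?half_double //= ?doubleK //; try lia.
rewrite -fold_sum; last by case: (odd L) hH hL => /=; lia.
rewrite (@big_cat_nat _ _ _ H) //=; last by lia.
rewrite (@big_cat_nat _ _ _ (L.+1 - H) H) //=; try lia.
case oL: (odd L) hH hL => /= hH hL.
  rewrite (@big_geq _ _ _ H (L.+1 - H)); last by lia. lia.
rewrite (@big_ltn _ _ _ H (L.+1 - H)); last by lia.
rewrite (@big_geq _ _ _ H.+1 (L.+1 - H)); last by lia.
have -> : H = L./2 by lia. lia.
Qed.

Lemma pairs (l : seq nat) :
  0 \notin l -> l != [::] -> ~~ refinable l ->
  size (missing l) = (largest l)./2 ->
  (forall a, a < (largest l).+1./2 -> (largest l - a \in l) = (a \notin l)) /\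
  (~~ odd (largest l) -> (largest l)./2 \notin l).
Proof.
move=> l0 ln nref hsz.
have LL := @largest_in l ln.
have le := @le_largest l.
move: LL le hsz nref; rewrite /missing /refinable.
set L := largest l => LL le hsz nref.
have L1 : 0 < L by rewrite lt0n; apply/eqP => h; rewrite h in LL; by rewrite LL in l0.
have notboth : forall a, 0 < a < L -> a + a != L -> (a \in l) || (L - a \in l).
  move=> a /andP[a0 aL] aa; apply/negPn/negP; rewrite negb_or => /andP[na nLa].
  move/negP: nref; apply; apply/hasP; exists a.
    by rewrite mem_filter na mem_iota; apply/andP; split => //; lia.
  apply/hasP; exists (L - a).
    by rewrite mem_filter nLa mem_iota; apply/andP; split => //; lia.
  rewrite subnKC ?LL ?andbT; last by lia.
  by apply/eqP => h; move/eqP: aa; apply; lia.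
have hM : \sum_(1 <= i < L) (i \notin l : nat) = L./2.
  rewrite -hsz size_filter count_iota_sum add1n big_nat_recr //=.
  by rewrite LL addn0.
have W := whole_sum (fun a => (a \notin l : nat)) L.
rewrite big_ltn // big_nat_recr //= hM LL (@big_ltn _ _ _ 0) /= in W; last by lia.
rewrite subn0 LL (negbTE l0) /= in W.
set H := L.+1./2 in W *.
set g := fun a => (a \notin l : nat) + (L - a \notin l : nat) in W.
set e := (if odd L then 0 else (L./2 \notin l : nat)) in W.
have hL := odd_double_half L.
have hH : H = odd L + L./2.
  rewrite /H -{1}hL; case: (odd L) => /=; rewrite ?uphalf_double ?half_double //=; lia.
have gle : forall a, 1 <= a < H -> g a <= 1.
  move=> a ha; have h1 : 0 < a < L by lia.
  have h2 : a + a != L by apply/eqP; lia.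
  have := notboth a h1 h2; rewrite /g.
  by case: (a \in l); case: (L - a \in l).
have hsum : \sum_(1 <= a < H) (1 - g a) + \sum_(1 <= a < H) g a = H - 1.
  rewrite -big_split /= -[H - 1]muln1 -sum_nat_const_nat; apply: eq_big_nat => i hi.
  by have := gle i hi; lia.
have gsum : \sum_(1 <= a < H) g a <= H - 1.
  by rewrite -hsum leq_addl.
have W2 : \sum_(1 <= a < H) g a + e = L./2.
  by move: W; rewrite /H /g /=; lia.
have eq0 : \sum_(1 <= a < H) (1 - g a) = 0 /\ (~~ odd L -> e = 1).
  move: W2 hsum gsum; rewrite /e; case: (odd L) hH hL => /= hH hL.
    by move=> *; split => //; lia.
  by case: (L./2 \notin l) => /= *; (split; [lia | move=> _; lia]).
case: eq0 => /eqP eq0 he; move: eq0; rewrite sum_nat_seq_eq0 => /allP eq0.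
split.
  move=> a aH; case: a aH => [|a] aH; first by rewrite subn0 LL.
  have := eq0 a.+1; rewrite mem_index_iota aH => /(_ isT) /=.
  have := gle a.+1; rewrite aH => /(_ isT); rewrite /g.
  by case: (a.+1 \in l); case: (L - a.+1 \in l).
move=> oL; have := he oL; rewrite /e (negbTE oL).
by case: (L./2 \notin l).
Qed.

Lemma sumn_range (l : seq nat) L : sorted ltn l -> (forall x, x \in l -> x <= L) ->
  sumn l = \sum_(0 <= a < L.+1) a * (a \in l).
Proof.
move=> sl le.
have -> : sumn l = sumn [seq x <- iota 0 L.+1 | x \in l].
  by rewrite filter_iota_sorted // => x /le.
rewrite sumnE big_filter big_mkcond /=.
by apply: eq_bigr => i _; case: (i \in l); rewrite ?muln1 ?muln0.
Qed.

Lemma sum_formula (l : seq nat) L : sorted ltn l -> (forall x, x \in l -> x <= L) ->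
  (forall a, a < L.+1./2 -> (L - a \in l) = (a \notin l)) ->
  (~~ odd L -> L./2 \notin l) ->
  sumn l = 'C(L.+1./2, 2) + \sum_(0 <= a < L.+1./2) (a \notin l) * (L - a.*2).
Proof.
move=> sl le hp he.
rewrite (sumn_range l L sl le) whole_sum -bin2_sum -big_split /=.
have hL := odd_double_half L.
have -> : (if odd L then 0 else L./2 * (L./2 \in l)) = 0.
  by case oL: (odd L) => //; rewrite (negbTE (he _)) ?oL ?muln0.
rewrite addn0; apply: eq_big_nat => a /andP[_ ha].
rewrite hp //.
have h2 : a.*2 < L.
  have := uphalf_half L; rewrite /uphalf /=; lia.
case: (a \in l) => /=; lia.
Qed.

Lemma upper (l : seq nat) n L : 7 <= n -> 0 \notin l ->
  T n = 'C(L.+1./2, 2) + \sum_(0 <= a < L.+1./2) (a \notin l) * (L - a.*2) ->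
  L <= 2 * n - 4.
Proof.
move=> n7 l0 hT.
have Tn : T n = 'C(n.+1, 2) by rewrite /T divn2 bin2 mulnC.
have bS : 'C(n.+1, 2) = 'C(n, 2) + n by rewrite binS bin1.
have hH := uphalf_half L.
have hL := odd_double_half L.
rewrite leqNgt; apply/negP => hlt.
rewrite Tn big_ltn in hT; last by lia.
rewrite (negbTE l0) subn0 /= mul1n in hT.
set H := uphalf L in hT hH.
have [h1|h1] := leqP (2 * n - 1) L.
  have : 'C(n, 2) <= 'C(H, 2) by apply: leq_bin2l; lia.
  lia.
have bS' : 'C(n, 2) = 'C(n.-1, 2) + n.-1.
  by case: n n7 {hT Tn bS h1 hlt} => // n _; rewrite binS bin1.
have hHn : H = n.-1 by lia.
rewrite hHn in hT.
have [h2|h2] := leqP L (2 * n - 3).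
  have hL3 : L = 2 * n - 3 by lia.
  have eS : \sum_(1 <= a < n.-1) (a \notin l) * (L - a.*2) =
            \sum_(1 <= a < n.-2) (a \notin l) * ((n - 3 - a).*2 + 3) +
            (n.-2 \notin l) * (L - (n.-2).*2).
    have -> : n.-1 = (n.-2).+1 by lia.
    rewrite big_nat_recr /=; last by lia.
    congr (_ + _); apply: eq_big_nat => a ha; congr (_ * _); lia.
  have K : let x := \sum_(1 <= a < n.-2) (a \notin l) * ((n - 3 - a).*2 + 3) in
           (x == 0) || (3 <= x).
    apply: (big_ind (fun x => (x == 0) || (3 <= x))) => //.
      by move=> x y /orP[/eqP->|hx] /orP[/eqP->|hy]; apply/orP; lia.
    by move=> a _; case: (a \notin l); apply/orP; lia.
  move: K eS; rewrite /=.
  have : (n.-2 \notin l) * (L - (n.-2).*2) <= 1.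
    by case: (n.-2 \notin l); lia.
  move=> ht /orP[/eqP K|K] eS; lia.
have hL2 : L = 2 * n - 2 by lia.
have K : ~~ odd (\sum_(1 <= a < n.-1) (a \notin l) * (L - a.*2)).
  apply: (big_ind (fun x => ~~ odd x)) => //.
    by move=> x y hx hy; rewrite oddD (negbTE hx) (negbTE hy).
  move=> a _; rewrite oddM.
  have -> : L - a.*2 = (n.-1 - a).*2 by lia.
  by rewrite odd_double andbF.
have : odd (\sum_(1 <= a < n.-1) (a \notin l) * (L - a.*2)).
  set S := \sum_(1 <= a < n.-1) _ in hT K *.
  have -> : S = 1 by move: hT bS bS' hL2 n7; clear; move: (binomial n.+1 2) (binomial n 2) (binomial n.-1 2) => a b c; lia.
  by [].
by rewrite (negbTE K).
Qed.

Lemma lower n l : 7 <= n -> maximal_unref (T n) l -> 2 * n - 4 <= largest l.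
Proof.
move=> n7 [_ hmax].
have [m hm] : exists m, n = m.+3 by exists (n - 3); lia.
subst n.
have m4 : 4 <= m by lia.
pose l0 := iota 1 m ++ [:: m.+4; 2 * m.+3 - 4].
have Hin : forall x, x \in l0 = (1 <= x < m.+1) || (x == m.+4) || (x == 2 * m.+3 - 4).
  by move=> x; rewrite mem_cat mem_iota !inE orbA.
have U : unrefinable (T m.+3) l0.
  apply/andP; split; last first.
    apply/hasPn => a; rewrite mem_filter => /andP[na ai].
    apply/hasPn => b; rewrite mem_filter => /andP[nb bi].
    rewrite mem_iota in ai; rewrite mem_iota in bi.
    rewrite Hin in na; rewrite Hin in nb.
    have ha : m < a by apply/negPn/negP => h; move: na; apply/negP/negPn; lia.
    have hb : m < b by apply/negPn/negP => h; move: nb; apply/negP/negPn; lia.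
    apply/negP => /andP[/eqP ab]; rewrite Hin => /orP[/orP[h|/eqP h]|/eqP h]; lia.
  apply/and4P; split.
  - rewrite (sorted_pairwise ltn_trans) pairwise_cat; apply/and3P; split.
    + apply/allrelP => x y; rewrite mem_iota !inE => hx /orP[/eqP->|/eqP->]; lia.
    + by rewrite -(sorted_pairwise ltn_trans) iota_ltn_sorted.
    + rewrite /= !andbT; lia.
  - rewrite Hin; lia.
  - rewrite /T /l0 sumn_cat /= sumnE.
    have -> : iota 1 m = index_iota 1 m.+1 by rewrite /index_iota subn1.
    have -> : \sum_(1 <= i < m.+1) i = \sum_(0 <= i < m.+1) i by rewrite (@big_ltn _ _ _ 0).
    rewrite bin2_sum (_ : (m.+3 * m.+4) %/ 2 = 'C(m.+4, 2)); last by rewrite bin2 divn2 mulnC.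
    rewrite !binS !bin1.
    rewrite !bin0; move: (binomial m 2) => c; apply/eqP; lia.
  - by rewrite size_cat size_iota /=; lia.
have := hmax l0 U.
have : 2 * m.+3 - 4 <= largest l0 by apply: leq_bigmax_seq; rewrite // Hin eqxx !orbT.
lia.
Qed.

Definition rr (l : seq nat) (y : nat) := count (fun j => j \notin l) (iota 0 y).

Lemma rr_succ l y : rr l y.+1 = rr l y + (y \notin l).
Proof. by rewrite /rr -addn1 iotaD count_cat /= addn0 add0n. Qed.

Lemma rr_mono l y y' : y <= y' -> rr l y <= rr l y'.
Proof. by move=> h; rewrite /rr -(subnKC h) iotaD count_cat leq_addr. Qed.

Lemma rr_thr l s b : s \notin l -> ((rr l s).+1 <= rr l b) = (s < b).
Proof.
move=> hs; case: (ltnP s b) => h.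
  by have := rr_mono l _ _ h; rewrite rr_succ hs addn1.
by apply/negbTE; rewrite -ltnNge ltnS rr_mono.
Qed.

Lemma shapeE (l : seq nat) L : sorted ltn l -> (forall x, x \in l -> x <= L) ->
  KN_shape (KN_path (S_of l) L) = map (rr l) (rev l).
Proof.
move=> sl le; rewrite /KN_shape /KN_path size_map size_iota map_rev; congr rev.
have -> : [seq k <- iota 0 L.+1 | nth false [seq ~~ S_of l j | j <- iota 0 L.+1] k]
   = [seq k <- iota 0 L.+1 | k \in l].
  apply: eq_in_filter => k; rewrite mem_iota add0n => /andP[_ hk].
  by rewrite (nth_map 0) ?size_iota // nth_iota // add0n /S_of negbK.
have hf : [seq k <- iota 0 L.+1 | k \in l] = l by apply: filter_iota_sorted => // x /le.
rewrite hf.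
apply/eq_in_map => k /le hk.
rewrite -map_take take_iota count_map /rr.
have -> : minn k L.+1 = k by apply/minn_idPl; lia.
by apply: eq_count => j; rewrite /= /S_of negbK.
Qed.

Lemma revpos (l : seq nat) x : sorted ltn l -> x \in l ->
  let i := (count (fun b => x < b) l).+1 in
  [/\ nth 0 (rev l) i.-1 = x, i <= size l &
      forall P : pred nat, count P (drop i (rev l)) = count (fun b => P b && (b < x)) l].
Proof.
move=> sl hx; move: sl; case/splitPr: hx => l1 l2 /=.
rewrite sorted_cat_cons => /andP[s1 s2].
have a1 : all (fun b => b < x) l1.
  move: s1; rewrite -cats1 (sorted_pairwise ltn_trans) pairwise_cat => /and3P[h _ _].
  by apply/allP => b hb; move/allrelP: h => /(_ b x hb (mem_head _ _)).
have a2 : all (fun b => x < b) l2 by move: s2; rewrite (path_sortedE ltn_trans) => /andP[].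
have c1 : forall P : pred nat, count (fun b => P b && (x < b)) l1 = 0.
  move=> P; apply/eqP; rewrite -leqn0 leqNgt -has_count; apply/hasP => -[b hb /andP[_]].
  by move/allP: a1 => /(_ b hb); lia.
have c2 : forall P : pred nat, count (fun b => P b && (b < x)) l2 = 0.
  move=> P; apply/eqP; rewrite -leqn0 leqNgt -has_count; apply/hasP => -[b hb /andP[_]].
  by move/allP: a2 => /(_ b hb); lia.
have e2 : count (fun b => x < b) l2 = size l2.
  by apply/eqP; rewrite -all_count.
have e1 : count (fun b => x < b) l1 = 0.
  by have := c1 predT; rewrite /=.
rewrite count_cat /= ltnn add0n e1 e2 add0n /=.
rewrite rev_cat rev_cons -cats1 -catA /=.
split.
- by rewrite nth_cat size_rev ltnn subnn.
- by rewrite size_cat /=; lia.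
- move=> P; rewrite drop_cat size_rev ltnNge leqnSn /= subSnn /= drop0 count_rev.
  rewrite count_cat /= ltnn andbF add0n c2 addn0.
  apply: eq_in_count => b hb; move/allP: a1 => /(_ b hb) ->; by rewrite andbT.
Qed.

Lemma count0 (P : pred nat) s : (forall b, b \in s -> ~~ P b) -> count P s = 0.
Proof.
by move=> h; apply/eqP; rewrite -leqn0 leqNgt -has_count; apply/hasP => -[b /h /negbTE ->].
Qed.

Lemma hookE (l : seq nat) L x s : sorted ltn l -> (forall y, y \in l -> y <= L) ->
  x \in l -> s < x -> s \notin l ->
  hook (map (rr l) (rev l)) (count (fun b => x < b) l).+1 (rr l s).+1 = x - s.
Proof.
move=> sl le hx sx hs.
have [hn hsz hd] := revpos l x sl hx.
have xL := le x hx.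
rewrite /hook /= (nth_map 0); last by rewrite size_rev; lia.
rewrite hn -map_drop count_map hd.
have -> : count (fun b => (preim (rr l) (fun r => (rr l s).+1 <= r)) b && (b < x)) l
        = count (fun b => (s < b) && (b < x)) l.
  by apply: eq_count => b; rewrite /= rr_thr.
have hf : [seq k <- iota 0 L.+1 | k \in l] = l by apply: filter_iota_sorted => // y /le.
have hc : count (fun b => (s < b) && (b < x)) l = count (mem l) (iota s.+1 (x - s.+1)).
rewrite -{1}hf count_filter.
have e : L.+1 = s.+1 + ((x - s.+1) + (L.+1 - x)) by lia.
rewrite {1}e iotaD iotaD add0n (_ : s.+1 + (x - s.+1) = x); last by lia.
rewrite !count_cat count0; last by move=> b; rewrite mem_iota /=; lia.
rewrite (count0 _ (iota x _)); last by move=> b; rewrite mem_iota /=; lia.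
rewrite addn0 add0n.
have -> : count (predI (fun b => (s < b) && (b < x)) (mem l)) (iota s.+1 (x - s.+1))
        = count (mem l) (iota s.+1 (x - s.+1)).
  by apply: eq_in_count => b; rewrite mem_iota => /andP[h1 h2] /=; rewrite h1 (_ : b < x) //; lia.
done.
rewrite hc.
have hr : rr l x = rr l s.+1 + count (fun j => j \notin l) (iota s.+1 (x - s.+1)).
  by rewrite /rr {1}(_ : x = s.+1 + (x - s.+1)) ?iotaD ?count_cat //; lia.
rewrite hr rr_succ hs.
have := count_predC (mem l) (iota s.+1 (x - s.+1)); rewrite size_iota.
have -> : count (predC (mem l)) (iota s.+1 (x - s.+1)) = count (fun j => j \notin l) (iota s.+1 (x - s.+1)) by [].
lia.
Qed.

Lemma ivt (f : nat -> nat) m v : (forall y, f y.+1 <= (f y).+1) -> f 0 <= v < f m ->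
  exists y, [/\ y < m, f y = v & f y.+1 = v.+1].
Proof.
move=> hf; elim: m => [|m IH] hv; first lia.
case: (ltnP v (f m)) => h.
  have [y [h1 h2 h3]] : exists y, [/\ y < m, f y = v & f y.+1 = v.+1] by apply: IH; lia.
  by exists y; split => //; lia.
exists m; split => //; have := hf m; lia.
Qed.

Lemma symcount (l : seq nat) L c : uniq l -> (forall y, y \in l -> y <= L) -> c <= L ->
  (forall a, a < c -> (L - a \in l) = (a \notin l)) ->
  forall y, y <= c -> count (fun b => L - y < b) l = rr l y.
Proof.
move=> ul le cL hs; elim => [|y IH] hy.
  by rewrite count0 // => b /le; rewrite subn0 -leqNgt.
have e : count (fun b => L - y.+1 < b) l =
         count (predU (fun b => L - y < b) (pred1 (L - y))) l.
  by apply: eq_count => b /=; apply/idP/idP; [move=> h; apply/orP; lia | move/orP; lia].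
have := count_predUI (fun b => L - y < b) (pred1 (L - y)) l.
rewrite -e (@count0 (predI (fun b => L - y < b) (pred1 (L - y))) l); last by move=> b _ /=; apply/negP; case/andP => h1 /eqP h2; lia.
rewrite (count_uniq_mem _ ul) hs; last by lia.
by rewrite rr_succ IH; [lia | lia].
Qed.

Theorem lemma3p8 (k n : nat) (l : seq nat) :
  4 <= k -> n = 2 * k - 1 -> Ubar (T n) l ->
  forall z : nat,
    z < size [seq s <- iota 0 n.-1 | S_of l s] ->
    nth 0 [seq s <- iota 0 n.-1 | S_of l s] z = n - 2 ->
    forall i : nat, 1 <= i <= z ->
      let Y := KN_shape (KN_path (S_of l) (largest l)) in
      in_diagram Y i z.+1 /\ hook Y i i = 2 * hook Y i z.+1.
Proof.
move=> hk hn [hm hsz] z hz hnth i /andP[i1 iz] Y.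
have n7 : 7 <= n by lia.
have lo := lower n l n7 hm.
case: hm => /andP[dp nref] _.
move: dp => /and4P[sl l0 /eqP hsum sz2].
have ln : l != [::] by apply/eqP => h; rewrite h in sz2.
have le : forall x, x \in l -> x <= largest l by move=> x; apply: le_largest.
have [hp he] := pairs l l0 ln nref hsz.
have hs := sum_formula l (largest l) sl le hp he.
rewrite hsum in hs.
have up := upper l n (largest l) n7 l0 hs.
rewrite /Y; clear Y.
move: hp he le lo up; set L := largest l => hp he le lo up.
set c := n - 2 in hnth *.
have hL : L = c.*2 by rewrite /c; lia.
have oL : ~~ odd L by rewrite hL odd_double.
have hc : L./2 = c by rewrite hL doubleK.
have cnl : c \notin l by have := he oL; rewrite hc.
have hup : L.+1./2 = c by have := uphalf_half L; rewrite /uphalf (negbTE oL) hc.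
have sym : forall a, a < c -> (L - a \in l) = (a \notin l) by move=> a ha; apply: hp; rewrite hup.
clear hs hsum up lo hsz nref hp he sz2 hup hc oL.
have hI : iota 0 n.-1 = iota 0 c ++ [:: c].
  by rewrite (_ : n.-1 = c + 1); [rewrite iotaD | lia].
have hfc : [seq s <- [:: c] | S_of l s] = [:: c] by rewrite /= /S_of cnl.
rewrite hI filter_cat hfc in hz hnth.
set Sc := [seq s <- iota 0 c | S_of l s] in hz hnth.
have szSc : size Sc = rr l c by rewrite size_filter.
have hzc : z = rr l c.
  move: hnth; rewrite nth_cat szSc; case: ltnP => h.
    move=> e; have : nth 0 Sc z \in Sc by apply: mem_nth; rewrite szSc.
    by rewrite e mem_filter mem_iota; lia.
  by rewrite size_cat szSc /= in hz; lia.
have hf : forall y, rr l y.+1 <= (rr l y).+1.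
  by move=> y; rewrite rr_succ; case: (y \notin l); lia.
have [s [hs1 hs2 hs3]] := ivt (rr l) c i.-1 hf (ltac:(rewrite -hzc {1}/rr /=; lia)).
have snl : s \notin l by move: hs3; rewrite rr_succ hs2; case: (s \notin l) => //=; lia.
set x := L - s.
have hx : x \in l by rewrite /x sym.
have ul : uniq l by apply: (sorted_uniq ltn_trans ltnn sl).
have cL : c <= L by rewrite hL -addnn leq_addr.
have sc : s <= c by apply: ltnW.
have cntx : count (fun b => x < b) l = rr l s.
  rewrite /x; exact: (symcount l L c ul le cL sym s sc).
have Yeq := shapeE l L sl le.
rewrite Yeq.

have hi : i = (count (fun b => x < b) l).+1 by rewrite cntx hs2; lia.
have [hnx hsz' _] := revpos l x sl hx.
split.
  rewrite /in_diagram size_map size_rev -hi in hsz' *.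
  rewrite hsz' i1 /= (nth_map 0); last by rewrite size_rev; lia.
  rewrite -hi in hnx; rewrite hnx.
  have := rr_mono l c.+1 x (ltac:(rewrite /x; lia)); rewrite rr_succ cnl; lia.
have hi2 : i = (rr l s).+1 by rewrite hs2; lia.
have xs : s < x by rewrite /x; lia.
have xc : c < x by rewrite /x; lia.
have -> : hook (map (rr l) (rev l)) i i = x - s.
  by rewrite {1}hi {1}hi2; exact: (hookE l L x s sl le hx xs snl).
have -> : hook (map (rr l) (rev l)) i z.+1 = x - c.
  by rewrite hi hzc; exact: (hookE l L x c sl le hx xc cnl).
rewrite /x; lia.
Qed.
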